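(* Let $\pi=(\pi_n^{n+1}\colon(X_{n+1},f_{n+1})\to(X_n,f_n))_{n\ge1}$ be an inverse sequence of equivariant maps, let $(X,f)=\lim_\pi(X_n,f_n)$, and suppose $f_n$ is chain transitive for every $n\ge1$ (so $f$ is chain transitive). Let $\mathcal{D}_\pi=\{(D_n)_{n\ge1}\in\prod_{n\ge1}\mathcal{D}(f_n):\pi_n^{n+1}(D_{n+1})\subset D_n\ \forall n\ge1\}$ and, for $D_\ast=(D_n)_{n\ge1}\in\mathcal{D}_\pi$, $[D_\ast]=\{x=(x_n)_{n\ge1}\in X:x_n\in D_n\ \forall n\ge1\}$. If $\pi$ satisfies MLC(1), then $\mathcal{D}(f)=\{[D_\ast]:D_\ast\in\mathcal{D}_\pi\}$.
   Context: Each $X_n$ is a compact metric space, $f_n$ a continuous self-map, $\pi_n^{n+1}\colon X_{n+1}\to X_n$ continuous with $f_n\circ\pi_n^{n+1}=\pi_n^{n+1}\circ f_{n+1}$. $X=\{(x_n)\in\prod_n X_n:\pi_n^{n+1}(x_{n+1})=x_n\ \forall n\}$ with the product topology and $f((x_n))=(f_n(x_n))$. $\pi$ satisfies MLC(1) if $\pi_n^{n+1}(X_{n+1})=\pi_n^{n+1}(\pi_{n+1}^{n+2}(X_{n+2}))$ for all $n$. For a continuous map $g$ of a compact metric space $(Y,d)$: a $\delta$-chain is a finite sequence $(y_i)_{i=0}^k$, $k>0$, with $d(g(y_i),y_{i+1})\le\delta$, a $\delta$-cycle of length $k$ if $y_0=y_k$; $g$ is chain transitive if any two points are joined by a $\delta$-chain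 for every $\delta>0$. For chain transitive $g$ and $\delta>0$, $m(g,\delta)$ is the gcd of the lengths of $\delta$-cycles; $y\sim_{g,\delta}z$ iff there is a $\delta$-chain from $y$ to $z$ of length divisible by $m(g,\delta)$; $y\sim_g z$ iff $y\sim_{g,\delta}z$ for all $\delta>0$; $\mathcal{D}(g)$ is the set of equivalence classes of $\sim_g$. *)

(* Defs.v *)
From HB Require Import structures.
From mathcomp Require Import all_boot all_order all_algebra.
From mathcomp Require Import all_classical all_reals.
From mathcomp Require Import topology metric_structure.
Set Implicit Arguments. Unset Strict Implicit. Unset Printing Implicit Defensive.
Import Order.TTheory GRing.Theory Num.Theory.
Local Open Scope classical_set_scope.
Local Open Scope ring_scope.

Section ChainDefs.
Context {R : realType} {T : Type} (d : T -> T -> R) (g : T -> T).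

Definition dchain (delta : R) (y z : T) (k : nat) : Prop :=
  exists ys : nat -> T, [/\ (0 < k)%N, ys 0%N = y, ys k = z &
    forall i, (i < k)%N -> d (g (ys i)) (ys i.+1) <= delta].

Definition cycle_lengths (delta : R) : set nat :=
  [set k | exists y, dchain delta y y k].

Definition chain_transitive : Prop :=
  forall (delta : R) (y z : T), 0 < delta -> exists k, dchain delta y z k.

(** gcd of a set of natural numbers (0 for the empty set) *)
Definition gcd_set (S : set nat) : nat :=
  xget 0%N [set m | (forall k, S k -> (m %| k)%N) /\
                    (forall m', (forall k, S k -> (m' %| k)%N) -> (m' %| m)%N)].

Definition mper (delta : R) : nat := gcd_set (cycle_lengths delta).

Definition sim_delta (delta : R) (y z : T) : Prop :=
  exists k, dchain delta y z k /\ (mper delta %| k)%N.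

Definition sim (y z : T) : Prop := forall delta : R, 0 < delta -> sim_delta delta y z.

Definition Dcl : set (set T) := [set C | exists y, C = [set z | sim y z]].

End ChainDefs.

(** inverse limit of (X_n, pi_n^{n+1}) (indices start at 0) *)
Definition invlim {R : realType} (X : nat -> metricType R)
  (pi : forall n, X n.+1 -> X n) : Type :=
  {x : forall n, X n | forall n, pi n (x n.+1) = x n}.

Definition limf {R : realType} (X : nat -> metricType R)
  (pi : forall n, X n.+1 -> X n) (f : forall n, X n -> X n)
  (hc : forall n (x : X n.+1), f n (pi n x) = pi n (f n.+1 x))
  (x : invlim pi) : invlim pi :=
  @exist (forall n, X n) (fun y => forall n, pi n (y n.+1) = y n) (fun n => f n (proj1_sig x n))
    (fun n => eq_trans (esym (hc n (proj1_sig x n.+1)))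
                       (f_equal (f n) (proj2_sig x n))).

(** a metric inducing the product topology on the inverse limit:
    d(x,y) = sup_n 2^-n min(1, d_n(x_n, y_n)) *)
Definition limdist {R : realType} (X : nat -> metricType R)
  (pi : forall n, X n.+1 -> X n) (x y : invlim pi) : R :=
  sup [set r : R | exists n, r = (2 : R) ^- n *
        Order.min 1 (mdist (proj1_sig x n) (proj1_sig y n))].

Definition MLC1 {R : realType} (X : nat -> metricType R)
  (pi : forall n, X n.+1 -> X n) : Prop :=
  forall n, range (pi n) = pi n @` range (pi n.+1).
Arguments limdist {R X} pi x y.

(* Main.v *)
Require Import Defs.
From HB Require Import structures.
From mathcomp Require Import all_boot all_order all_algebra.
From mathcomp Require Import all_classical all_reals.
From mathcomp Require Import topology metric_structure.
From mathcomp Require Import lra.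
Import Order.TTheory GRing.Theory Num.Theory.
Local Open Scope classical_set_scope.
Local Open Scope ring_scope.
Set Implicit Arguments. Unset Strict Implicit. Unset Printing Implicit Defensive.
Section Gcd.
Lemma gcd_set_ex (S : set nat) : exists m : nat,
  (forall k, S k -> (m %| k)%N) /\
  (forall m', (forall k, S k -> (m' %| k)%N) -> (m' %| m)%N).
Proof.
have [[k0 [Sk0 k0p]]|nok] := pselect (exists k, S k /\ (0 < k)%N); last first.
  exists 0%N; split => [k Sk|m' _]; last exact: dvdn0.
  rewrite dvd0n; apply/negPn/negP => kn0; apply: nok; exists k; split => //.
  by rewrite lt0n.
pose P j := exists s : seq nat, [/\ forall k, k \in s -> S k, foldr gcdn 0%N s = j & (0 < j)%N].
have exP : exists j, `[< P j >].
  exists k0; apply/asboolP; exists [:: k0]; split => //=.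
  - by move=> k; rewrite inE => /eqP ->.
  - by rewrite gcdn0.
case: (ex_minnP exP) => g /asboolP [s [sS sg gp]] gmin.
have cd m' : (forall k, S k -> (m' %| k)%N) -> (m' %| foldr gcdn 0 s)%N.
  move=> H; elim: s sS {sg} => [|a s IH] sS /=; first exact: dvdn0.
  rewrite dvdn_gcd IH ?andbT; first by apply: H; apply: sS; rewrite inE eqxx.
  by move=> k ks; apply: sS; rewrite inE ks orbT.
exists g; split; last by move=> m' H; rewrite -sg; exact: cd.
move=> k Sk.
have Pk : `[< P (gcdn k g) >].
  apply/asboolP; exists (k :: s); split => /=.
  - by move=> x; rewrite inE => /orP[/eqP ->|]//; exact: sS.
  - by rewrite sg.
  - by rewrite gcdn_gt0 gp orbT.
have := gmin _ Pk => le.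
have : gcdn k g = g.
  apply/eqP; rewrite eqn_leq le andbT; apply: dvdn_leq => //; exact: dvdn_gcdr.
by move=> <-; exact: dvdn_gcdl.
Qed.

Context {R : realType} {T : Type} (d : T -> T -> R) (g : T -> T).

Lemma mper_dvd delta k : cycle_lengths d g delta k -> (mper d g delta %| k)%N.
Proof. by have := xgetPex 0%N (gcd_set_ex (cycle_lengths d g delta)) => -[+ _]; apply. Qed.

Lemma dvd_mper delta m' : (forall k, cycle_lengths d g delta k -> (m' %| k)%N) ->
  (m' %| mper d g delta)%N.
Proof. by have := xgetPex 0%N (gcd_set_ex (cycle_lengths d g delta)) => -[_]; apply. Qed.
End Gcd.
Section Chains.
Context {R : realType} {T : Type} (d : T -> T -> R) (g : T -> T).

Lemma dchain_cat delta y z w k l : dchain d g delta y z k -> dchain d g delta z w l ->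
  dchain d g delta y w (k + l).
Proof.
move=> [ys [k0 y0 yk H]] [zs [l0 z0 zl H']].
exists (fun i => if (i <= k)%N then ys i else zs (i - k)%N); split.
- by rewrite addn_gt0 k0.
- by rewrite leq0n.
- by rewrite -{2}(addn0 k) leq_add2l leqNgt l0 /= addKn.
- move=> i ilt; case: (ltnP i k) => ik.
  + by rewrite (ltnW ik) ?ik; apply: H.
  + case: (eqVneq i k) => [->|nik].
      by rewrite leqnn subSnn yk -z0; apply: H'.
    have ik' : (k < i)%N by rewrite ltn_neqAle eq_sym nik.
    rewrite leqNgt ik' /= subSn //; apply: H'.
    by rewrite ltn_subLR // ltnW.
Qed.

Lemma dchain_mono delta delta' y z k : delta <= delta' ->
  dchain d g delta y z k -> dchain d g delta' y z k.
Proof.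
move=> le [ys [k0 y0 yk H]]; exists ys; split => // i ik.
exact: le_trans (H i ik) le.
Qed.

Lemma mper_mono delta delta' : delta <= delta' ->
  (mper d g delta' %| mper d g delta)%N.
Proof.
move=> le; apply: dvd_mper => k [y ch]; apply: mper_dvd; exists y.
exact: dchain_mono ch.
Qed.

Lemma sim_delta_trans delta y z w : sim_delta d g delta y z -> sim_delta d g delta z w ->
  sim_delta d g delta y w.
Proof.
move=> [k [ch dk]] [l [ch' dl]]; exists (k + l)%N; split.
  exact: dchain_cat ch ch'.
by rewrite dvdn_add.
Qed.

Hypothesis hct : chain_transitive d g.

Lemma sim_delta_refl delta y : 0 < delta -> sim_delta d g delta y y.
Proof.
move=> dp; have [k ch] := hct y y dp; exists k; split => //.
by apply: mper_dvd; exists y.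
Qed.

Lemma sim_delta_sym delta y z : 0 < delta -> sim_delta d g delta y z -> sim_delta d g delta z y.
Proof.
move=> dp [k [ch dk]]; have [l ch'] := hct z y dp; exists l; split => //.
have : (mper d g delta %| k + l)%N.
  by apply: mper_dvd; exists y; exact: dchain_cat ch ch'.
by rewrite dvdn_addr.
Qed.

Lemma sim_refl y : sim d g y y.
Proof. by move=> delta dp; exact: sim_delta_refl. Qed.
Lemma sim_sym y z : sim d g y z -> sim d g z y.
Proof. by move=> H delta dp; apply: sim_delta_sym => //; exact: H. Qed.
Lemma sim_trans y z w : sim d g y z -> sim d g z w -> sim d g y w.
Proof. by move=> H H' delta dp; apply: sim_delta_trans (H _ dp) (H' _ dp). Qed.

Lemma sim_class y z : sim d g y z -> [set w | sim d g y w] = [set w | sim d g z w].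
Proof.
move=> yz; apply/seteqP; split => w /=.
  by move=> yw; apply: sim_trans (sim_sym yz) yw.
by move=> zw; apply: sim_trans yz zw.
Qed.
End Chains.

Section MapChains.
Context {R : realType} {T1 T2 : Type} (d1 : T1 -> T1 -> R) (g1 : T1 -> T1)
  (d2 : T2 -> T2 -> R) (g2 : T2 -> T2) (h : T1 -> T2)
  (hg : forall x, h (g1 x) = g2 (h x)).

Lemma dchain_map delta1 delta2 y z k :
  (forall a b, d1 a b <= delta1 -> d2 (h a) (h b) <= delta2) ->
  dchain d1 g1 delta1 y z k -> dchain d2 g2 delta2 (h y) (h z) k.
Proof.
move=> hd [ys [k0 y0 yk H]]; exists (h \o ys); split => //=; rewrite ?y0 ?yk //.
by move=> i ik; rewrite -hg; apply: hd; apply: H.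
Qed.

Lemma sim_map : (forall delta2, 0 < delta2 -> exists2 delta1, 0 < delta1 &
    forall a b, d1 a b <= delta1 -> d2 (h a) (h b) <= delta2) ->
  forall y z, sim d1 g1 y z -> sim d2 g2 (h y) (h z).
Proof.
move=> H y z yz delta2 d2p; have [delta1 d1p hd] := H _ d2p.
have [k [ch dk]] := yz _ d1p; exists k; split; first exact: dchain_map ch.
apply: dvdn_trans dk; apply: dvd_mper => l [w cw]; apply: mper_dvd.
by exists (h w); exact: dchain_map cw.
Qed.
End MapChains.

Section MetricLemmas.
Context {R : realType} {T : metricType R}.

Lemma dchain_end (g : T -> T) d1 d2 y c b k : dchain mdist g d1 y c k ->
  mdist c b <= d2 -> dchain mdist g (d1 + d2) y b k.
Proof.
move=> [ys [k0 y0 yk H]] cb.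
have d20 : 0 <= d2 by apply: le_trans cb; exact: mdist_ge0.
exists (fun i => if i == k then b else ys i); split => //.
- by rewrite (ltn_eqF k0).
- by rewrite eqxx.
- move=> i ik; rewrite (ltn_eqF ik); case: eqP => [ek|nek].
    apply: le_trans (metric_triangle _ (ys i.+1) _) _.
    by apply: lerD; [exact: H | rewrite ek yk].
  by apply: le_trans (H i ik) _; rewrite lerDl.
Qed.

Lemma sim_closed (g : T -> T) y : closed [set w | sim mdist g y w].
Proof.
move=> b clb delta dp.
have d2p : 0 < delta / 2 by rewrite divr_gt0.
have [c [/= yc bc]] := clb _ (nbhsx_ballx b _ d2p).
rewrite ballEmdist /= in bc.
have [k [ch dk]] := yc _ d2p.
exists k; split.
  rewrite [delta]splitr; apply: dchain_end ch _.
  by rewrite metric_sym ltW.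
apply: dvdn_trans dk; apply: mper_mono.
lra.
Qed.

Context {U : metricType R}.

Lemma unif_cont (h : T -> U) : compact [set: T] -> continuous h ->
  forall e, 0 < e -> exists2 dl, 0 < dl &
    forall a b, mdist a b <= dl -> mdist (h a) (h b) <= e.
Proof.
move=> cT ch e ep; apply: contrapT => Hn.
have Hn' dl : 0 < dl -> exists a b, mdist a b <= dl /\ e < mdist (h a) (h b).
  move=> dlp; apply: contrapT => Hab; apply: Hn; exists dl => // a b abd.
  apply: contrapT => nle; apply: Hab; exists a, b; split => //.
  by rewrite ltNge; apply/negP.
pose B dl := [set a | exists b, mdist a b <= dl /\ e < mdist (h a) (h b)].
pose F := filter_from [set dl : R | 0 < dl] B.
have FF : Filter F.
  apply: filter_from_filter; first by exists 1 => /=; exact: ltr01.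
  move=> i j ip jp; exists (Order.min i j); first by rewrite /= lt_min ip jp.
  move=> a [b [abd abe]]; split; exists b; split => //;
    by apply: le_trans abd _; rewrite ge_min lexx ?orbT.
have PF : ProperFilter F.
  apply: filter_from_proper => dl dlp.
  by have [a [b H]] := Hn' dl dlp; exists a, b.
have [p [_ clp]] := cT F PF (filterT).
have e2p : 0 < e / 2 by rewrite divr_gt0.
have := ch p (ball (h p) (e / 2)) (nbhsx_ballx _ _ e2p).
move/nbhs_ballP => [eta etap sub].
have eta2p : 0 < eta / 2 by rewrite divr_gt0.
have [a [[b [abd abe]] pa]] := clp (B (eta / 2)) (ball p (eta / 2))
  (ltac:(by exists (eta / 2))) (nbhsx_ballx _ _ eta2p).
have pa' : ball p eta a.
  by apply: le_ball pa; lra.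
have pb : ball p eta b.
  rewrite ballEmdist /=; rewrite ballEmdist /= in pa.
  apply: le_lt_trans (metric_triangle _ a _) _.
  by rewrite [eta]splitr ltr_leD.
have := sub _ pa'; have := sub _ pb; rewrite /= !ballEmdist /= => hb ha.
have : mdist (h a) (h b) < e.
  apply: le_lt_trans (metric_triangle _ (h p) _) _.
  by rewrite [e]splitr metric_sym ltrD.
by rewrite ltNge (ltW abe).
Qed.
End MetricLemmas.

Section LimDist.
Context {R : realType} (X : nat -> metricType R) (pi : forall n, X n.+1 -> X n).

Lemma two_gt1 : (1 : R) < 2. Proof. lra. Qed.
Lemma two_gt0 : (0 : R) < 2. Proof. lra. Qed.

Lemma pow2_le n m : (n <= m)%N -> (2:R) ^- m <= 2 ^- n.
Proof.
move=> nm; rewrite lef_pV2 ?posrE ?exprn_gt0 ?two_gt0 //.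
by rewrite ler_eXn2l // two_gt1.
Qed.

Lemma pow2_gt0 n : (0 : R) < 2 ^- n.
Proof. by rewrite invr_gt0 exprn_gt0 // two_gt0. Qed.

Lemma pow2_small (e : R) : 0 < e -> exists N, 2 ^- N < e.
Proof.
move=> ep; have hi : 0 <= e^-1 by rewrite invr_ge0 ltW.
have := archi_boundP hi.
set n := Num.Def.archi_bound _ => hn; exists n.
have h : (n%:R : R) <= 2 ^+ n.
  by rewrite -(natrX R 2 n) ler_nat ltnW // ltn_expl.
rewrite -[e]invrK ltf_pV2 ?posrE ?invr_gt0 ?exprn_gt0 ?two_gt0 //.
exact: lt_le_trans hn h.
Qed.

Lemma minR_ge0 (a b : R) : 0 <= a -> 0 <= b -> 0 <= Order.min a b.
Proof. by rewrite /Order.min; case: ifP. Qed.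
Lemma minR_lel (a b : R) : Order.min a b <= a.
Proof. by rewrite /Order.min; case: ifP => // /negbT; rewrite -leNgt. Qed.
Lemma minR_ler (a b : R) : Order.min a b <= b.
Proof. by rewrite /Order.min; case: ifP => // /ltW. Qed.
Lemma minR_le (a b c : R) : Order.min a b <= c -> a <= c \/ b <= c.
Proof. by rewrite /Order.min; case: ifP; [left|right]. Qed.

Definition ldset (x y : invlim pi) := [set r : R | exists n, r = (2 : R) ^- n *
        Order.min 1 (mdist (proj1_sig x n) (proj1_sig y n))].

Lemma ldset_bnd x y r : ldset x y r -> 0 <= r <= 1.
Proof.
move=> [n ->]; apply/andP; split.
  apply: mulr_ge0; first exact: ltW (pow2_gt0 _).
  by apply: minR_ge0; rewrite ?ler01 ?mdist_ge0.
apply: mulr_ile1.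
- exact: ltW (pow2_gt0 _).
- by apply: minR_ge0; rewrite ?ler01 ?mdist_ge0.
- by have := pow2_le (leq0n n); rewrite expr0 invr1.
- exact: minR_lel.
Qed.

Lemma limdist_ge x y n : (2 : R) ^- n *
   Order.min 1 (mdist (proj1_sig x n) (proj1_sig y n)) <= limdist pi x y.
Proof.
apply: ub_le_sup; last by exists n.
by exists 1 => r /ldset_bnd /andP[].
Qed.

Lemma limdist_le x y N (e : R) : 
  (forall n, (n <= N)%N -> mdist (proj1_sig x n) (proj1_sig y n) <= e) ->
  2 ^- N.+1 <= e -> limdist pi x y <= e.
Proof.
move=> H He; apply: ge_sup; first by exists (2 ^- 0 * Order.min 1 (mdist (proj1_sig x 0%N) (proj1_sig y 0%N))), 0%N.
move=> r [n ->]; case: (leqP n N) => nN.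
  apply: le_trans (H n nN); apply: le_trans (minR_ler 1 _).
  apply: ler_piMl; first by apply: minR_ge0; rewrite ?ler01 ?mdist_ge0.
  by have := pow2_le (leq0n n); rewrite expr0 invr1.
apply: le_trans He; apply: le_trans (pow2_le nN).
apply: ler_piMr; first exact: ltW (pow2_gt0 _).
exact: minR_lel.
Qed.

Lemma limdist_small x y n (e : R) : e <= 1 / 2 ->
  limdist pi x y <= 2 ^- n * e -> mdist (proj1_sig x n) (proj1_sig y n) <= e.
Proof.
move=> e2 H; have := le_trans (limdist_ge x y n) H.
rewrite ler_pM2l ?pow2_gt0 // => /minR_le [|//].
move=> le1; have : (1 : R) <= 1 / 2 := le_trans le1 e2.
lra.
Qed.
End LimDist.

Unset Implicit Arguments.

Section Threads.
Context {R : realType} (X : nat -> metricType R) (pi : forall n, X n.+1 -> X n)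
  (hX : forall n, compact [set: X n]) (hpi : forall n, continuous (pi n)).

Import ArrowAsProduct.

Lemma KL (C : forall n, set (X n)) : (forall n, closed (C n)) ->
  (forall m, exists t : forall n, X n, (forall n, C n (t n)) /\
      (forall n, (n < m)%N -> pi n (t n.+1) = t n)) ->
  exists u : invlim pi, forall n, C n (proj1_sig u n).
Proof.
move=> Ccl Hm.
pose K := [set t : forall n, X n | forall n, C n (t n)].
have cK : compact K.
  apply: (@tychonoff nat (fun n => X n) C) => n.
  exact: (subclosed_compact (Ccl n) (hX n)).
pose S m := [set t : forall n, X n | K t /\ forall n, (n < m)%N -> pi n (t n.+1) = t n].
pose F := filter_from [set: nat] S.
have FF : Filter F.
  apply: filter_from_filter; first by exists 0%N.
  move=> i j _ _; exists (maxn i j) => //.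
  move=> t [Kt Ht]; split; split => // n nlt; apply: Ht.
    exact: leq_trans nlt (leq_maxl _ _).
  exact: leq_trans nlt (leq_maxr _ _).
have PF : ProperFilter F.
  apply: (filter_from_proper FF) => m _.
  by have [t [Ct Ht]] := Hm m; exists t.
have FK : F K by exists 0%N => // t [].
have [p [Kp clp]] := cK F PF FK.
have thr n : pi n (p n.+1) = p n.
  apply: (@metric_hausdorff _ (X n)) => A B nA nB.
  have nA' := hpi n (p n.+1) A nA.
  have n1 : nbhs p [set t : forall n, X n | (pi n @^-1` A) (t n.+1)].
    exact: (@proj_continuous nat (fun n => X n) n.+1 p _ nA').
  have n2 : nbhs p [set t : forall n, X n | B (t n)].
    exact: (@proj_continuous nat (fun n => X n) n p _ nB).
  have [t [[_ Ht] [At Bt]]] := clp (S n.+2) _ (ltac:(by exists n.+2)) (filterI n1 n2).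
  by exists (t n); split => //; rewrite -(Ht n) //.
by exists (exist _ p thr).
Qed.
End Threads.

Section Lifts.
Context {R : realType} (X : nat -> metricType R) (pi : forall n, X n.+1 -> X n)
  (hX : forall n, compact [set: X n]) (hpi : forall n, continuous (pi n)).

Lemma down_threads (E : forall n, set (X n)) (a0 : forall n, X n) :
  (forall n, E n (a0 n)) -> (forall n b, E n.+1 b -> E n (pi n b)) ->
  forall m b, E m b -> exists t : forall n, X n,
    [/\ t m = b, forall n, E n (t n) & forall n, (n < m)%N -> pi n (t n.+1) = t n].
Proof.
move=> Ea0 Epi; elim => [|m IH] b Eb.
  exists (dfwith a0 0%N b); split.
  - by rewrite dfwithin.
  - by move=> n; case: (eqVneq 0%N n) => [e|ne]; [subst n; rewrite dfwithin | rewrite dfwithout].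
  - by [].
have [t [tm Et Ht]] := IH _ (Epi _ _ Eb).
exists (dfwith t m.+1 b); split.
- by rewrite dfwithin.
- by move=> n; case: (eqVneq m.+1 n) => [e|ne]; [subst n; rewrite dfwithin | rewrite dfwithout].
- move=> n nlt; rewrite (@dfwithout _ _ _ m.+1 b n); last by rewrite neq_ltn nlt orbT.
  case: (eqVneq m n) => [e|ne].
    by subst n; rewrite dfwithin tm.
  rewrite dfwithout; last by rewrite eqSS.
  apply: Ht; by rewrite ltn_neqAle eq_sym ne -ltnS.
Qed.

Lemma lift_thread (hmlc : MLC1 pi) (x0 : invlim pi) N a :
  (exists b, pi N b = a) -> exists u : invlim pi, proj1_sig u N = a.
Proof.
move=> ha.
pose C := dfwith (fun n => [set: X n]) N [set a].
have Ccl n : closed (C n).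
  case: (eqVneq N n) => [e|ne].
    subst n; rewrite /C dfwithin.
    exact: (@accessible_closed_set1 (X N) (@hausdorff_accessible (X N) (@metric_hausdorff R (X N))) a).
  by rewrite /C dfwithout //; exact: closedT.
have Q j : exists t : forall n, X n, [/\ t N = a,
    (exists b, pi (j + N)%N b = t (j + N)%N) &
    forall n, (n < j + N)%N -> pi n (t n.+1) = t n].
  elim: j => [|j [t [tN [b hb] Ht]]].
    have := @down_threads (fun n => range (pi n)) (proj1_sig x0) _ _ N a _.
    case.
    - by move=> n; exists (proj1_sig x0 n.+1) => //; exact: (proj2_sig x0 n).
    - by move=> n b _; exists b.
    - by case: ha => b hb; exists b.
    by move=> t [tN Et Ht]; exists t; split => //; case: (Et N) => b _ hb; exists b.
  have : (pi (j + N)%N @` range (pi (j + N).+1)) (t (j + N)%N).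
    by rewrite -hmlc; exists b.
  case=> c [c' _ hc'] hc.
  exists (dfwith t (j + N).+1 c); split.
  - by rewrite dfwithout // gtn_eqF // ltnS leq_addl.
  - by rewrite addSn dfwithin; exists c'.
  - move=> n nlt; rewrite addSn in nlt.
    rewrite (@dfwithout _ _ _ (j + N).+1 c n); last by rewrite neq_ltn nlt orbT.
    case: (eqVneq (j + N)%N n) => [e|ne].
      by subst n; rewrite dfwithin hc.
    rewrite dfwithout; last by rewrite eqSS.
    apply: Ht; by rewrite ltn_neqAle eq_sym ne -ltnS.
have [u Cu] : exists u : invlim pi, forall n, C n (proj1_sig u n).
  apply: (@KL R X pi hX hpi C Ccl) => m.
  have [t [tN _ Ht]] := Q m; exists t; split.
    move=> n; case: (eqVneq N n) => [e|ne].
      by subst n; rewrite /C dfwithin.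
    by rewrite /C dfwithout.
  by move=> n nm; apply: Ht; apply: leq_trans nm (leq_addr _ _).
by exists u; have := Cu N; rewrite /C dfwithin.
Qed.
End Lifts.

Lemma pick_min {R : realType} (a b : R) : 0 < a -> 0 < b ->
  exists2 c, 0 < c & c <= a /\ c <= b.
Proof.
move=> ap bp; case: (leP a b) => ab; first by exists a.
by exists b => //; split => //; exact: ltW.
Qed.

Section Main.
Context (R : realType) (X : nat -> metricType R)
  (f : forall n, X n -> X n) (pi : forall n, X n.+1 -> X n)
  (hX : forall n, compact [set: X n])
  (hf : forall n, continuous (f n))
  (hpi : forall n, continuous (pi n))
  (hc : forall n (x : X n.+1), f n (pi n x) = pi n (f n.+1 x))
  (hct : forall n, chain_transitive (@mdist R (X n)) (f n))
  (hmlc : MLC1 pi).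

Local Notation L := (invlim pi).
Local Notation F := (limf hc).
Local Notation DL := (limdist pi).

Lemma sim_pi n a b : sim mdist (f n.+1) a b -> sim mdist (f n) (pi n a) (pi n b).
Proof.
apply: (@sim_map R _ _ mdist (f n.+1) mdist (f n) (pi n)).
  by move=> x; rewrite hc.
move=> e ep; exact: (unif_cont (hX n.+1) (hpi n) ep).
Qed.

Lemma sim_proj n (x z : L) : sim DL F x z ->
  sim mdist (f n) (proj1_sig x n) (proj1_sig z n).
Proof.
apply: (@sim_map R _ _ DL F mdist (f n) (fun u : L => proj1_sig u n)).
  by [].
move=> e ep.
have [eta etap [etae eta2]] := @pick_min _ _ _ ep (ltac:(lra) : (0:R) < 1 / 2).
exists (2 ^- n * eta); first by rewrite mulr_gt0 // pow2_gt0.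
move=> a b hab; apply: le_trans etae.
exact: limdist_small eta2 hab.
Qed.

Lemma projQ N (e : R) : 0 < e -> exists2 eps, 0 < eps &
  forall u v : L, mdist (proj1_sig u N) (proj1_sig v N) <= eps ->
  forall n, (n <= N)%N -> mdist (proj1_sig u n) (proj1_sig v n) <= e.
Proof.
move=> ep; elim: N => [|N [eps epsp IH]].
  exists e => // u v h n; rewrite leqn0 => /eqP ->; exact: h.
have [eps' eps'p hu] := unif_cont (hX N.+1) (hpi N) epsp.
have [eta etap [etae eta2]] := @pick_min _ _ _ eps'p ep.
exists eta => // u v huv n; rewrite leq_eqVlt => /orP[/eqP ->|nN].
  exact: le_trans huv eta2.
apply: IH => //.
rewrite -(proj2_sig u N) -(proj2_sig v N).
apply: hu; exact: le_trans huv etae.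
Qed.

Lemma projU (e : R) : 0 < e -> exists N, exists2 eps, 0 < eps &
  forall u v : L, mdist (proj1_sig u N) (proj1_sig v N) <= eps -> DL u v <= e.
Proof.
move=> ep; have [N hN] := pow2_small ep.
have [eps epsp H] := projQ N e ep.
exists N, eps => // u v huv.
apply: (limdist_le (N := N)); first exact: H.
apply: le_trans (pow2_le (leqnSn N)) _; exact: ltW.
Qed.

Lemma sim_lim (x z : L) : (forall n, sim mdist (f n) (proj1_sig x n) (proj1_sig z n)) ->
  sim DL F x z.
Proof.
move=> H e ep.
have [N [eps epsp hU]] := projU e ep.
have [eps' eps'p hpiu] := unif_cont (hX N.+1) (hpi N) epsp.
have lift : forall a : X N.+1, exists u : L, proj1_sig u N = pi N a.
  move=> a; apply: (lift_thread X pi hX hpi hmlc x N (pi N a)); by exists a.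
have [lf hlf] := choice lift.
have claim : forall a b k (u v : L), dchain mdist (f N.+1) eps' a b k ->
    proj1_sig u N = pi N a -> proj1_sig v N = pi N b -> dchain DL F e u v k.
  move=> a b k u v [cs [k0 c0 ck Hc]] hu hv.
  pose ws i := if i == 0%N then u else if i == k then v else lf (cs i).
  have wsN i : (i <= k)%N -> proj1_sig (ws i) N = pi N (cs i).
    rewrite /ws; case: eqP => [->|i0]; first by rewrite c0.
    case: eqP => [->|ik]; first by rewrite ck.
    by rewrite hlf.
  exists ws; split; first exact: k0.
  - by rewrite /ws eqxx.
  - by rewrite /ws (gtn_eqF k0) eqxx.
  - move=> i ik; apply: hU.
    change (mdist (f N (proj1_sig (ws i) N)) (proj1_sig (ws i.+1) N) <= eps).
    rewrite wsN ?(ltnW ik) // wsN // hc; apply: hpiu; exact: Hc.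
have hdiv : (mper DL F e %| mper mdist (f N.+1) eps')%N.
  apply: dvd_mper => l [a cyc]; apply: mper_dvd; exists (lf a).
  exact: claim cyc (hlf a) (hlf a).
have [k [ch dk]] := H N.+1 eps' eps'p.
exists k; split; last exact: dvdn_trans hdiv dk.
apply: (claim _ _ _ _ _ ch); [exact: esym (proj2_sig x N) | exact: esym (proj2_sig z N)].
Qed.

Lemma sim_limE (y : L) : [set x : L | forall n, sim mdist (f n) (proj1_sig y n) (proj1_sig x n)]
  = [set z | sim DL F y z].
Proof.
apply/seteqP; split => z /=; first exact: sim_lim.
by move=> yz n; exact: sim_proj.
Qed.

Lemma main_eq : Dcl DL F =
  [set [set x : L | forall n, D n (proj1_sig x n)]
     | D in [set D : forall n, set (X n) |
               (forall n, Dcl (@mdist R (X n)) (f n) (D n)) /\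
               (forall n, pi n @` D n.+1 `<=` D n)]].
Proof using hX hf hpi hc hct hmlc.
apply/seteqP; split => C.
- move=> [y ->]; exists (fun n => [set w | sim mdist (f n) (proj1_sig y n) w]).
    split => n; first by exists (proj1_sig y n).
    move=> _ [w yw <-] /=; rewrite -(proj2_sig y n); exact: sim_pi yw.
  exact: sim_limE.
- move=> [D [HD Hpi] <-].
  pose a0 n := proj1_sig (cid (HD n)).
  have ha0 n : D n = [set z | sim mdist (f n) (a0 n) z] := proj2_sig (cid (HD n)).
  have Da0 n : D n (a0 n) by rewrite ha0; exact: sim_refl (hct n) _.
  have [y Dy] : exists y : L, forall n, D n (proj1_sig y n).
    apply: (KL X pi hX hpi D).
      by move=> n; rewrite ha0; exact: sim_closed.
    move=> m.
    have [t [_ Dt Ht]] := down_threads X pi D a0 Da0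
      (fun n b Db => Hpi n _ (ex_intro2 _ _ b Db erefl)) m (a0 m) (Da0 m).
    by exists t.
  exists y; rewrite -sim_limE; apply/seteqP; split => x /= Hx n.
    have := Dy n; have := Hx n; rewrite ha0 /= => ax ay.
    exact: sim_trans (sim_sym (hct n) ay) ax.
  have := Dy n; rewrite ha0 /= => ay.
  exact: sim_trans ay (Hx n).
Qed.

End Main.

Unset Implicit Arguments.

Theorem lemma3p3 (R : realType) (X : nat -> metricType R)
  (f : forall n, X n -> X n) (pi : forall n, X n.+1 -> X n)
  (hX : forall n, compact [set: X n])
  (hf : forall n, continuous (f n))
  (hpi : forall n, continuous (pi n))
  (hc : forall n (x : X n.+1), f n (pi n x) = pi n (f n.+1 x))
  (hct : forall n, chain_transitive (@mdist R (X n)) (f n))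
  (hmlc : MLC1 pi) :
  Dcl (limdist pi) (limf hc) =
  [set [set x : invlim pi | forall n, D n (proj1_sig x n)]
     | D in [set D : forall n, set (X n) |
               (forall n, Dcl (@mdist R (X n)) (f n) (D n)) /\
               (forall n, pi n @` D n.+1 `<=` D n)]].
Proof. by apply: main_eq. Qed.
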